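(* Let $\mathcal{A}$ be a finite set of positive integers, let $w \leqslant z$ be real numbers, and let $m_1, \dots, m_6$ be real numbers with $(m_1, m_2) \in \mathcal{U}$, $(m_3, m_4) \in \mathcal{U}$ and $(m_5, m_6) \in \mathcal{U}$. Writing $M^r_6 = \sum_{1 \leqslant i_1 < \cdots < i_r \leqslant 6} m_{i_1}\cdots m_{i_r}$ and $P = m_1m_2m_3m_4m_5m_6$, we have $$ S(\mathcal{A}, z) \leqslant S(\mathcal{A}, w) - \frac{M^5_6 - M^4_6 + M^3_6 - M^2_6 + M^1_6 - 1}{P} \sum_{w \leqslant p_1 < z} S(\mathcal{A}_{p_1}, w) + \frac{2(M^4_6 - 3M^3_6 + 7M^2_6 - 15M^1_6 + 31)}{P} \sum_{w \leqslant p_2 < p_1 < z} S(\mathcal{A}_{p_1p_2}, w) $$ $$ - \frac{6(M^3_6 - 6M^2_6 + 25M^1_6 - 90)}{P} \sum_{w \leqslant p_3 < p_2 < p_1 < z} S(\mathcal{A}_{p_1p_2p_3}, w) + \frac{24(M^2_6 - 10M^1_6 + 65)}{P} \sum_{w \leqslant p_4 < \cdots < p_1 < z} S(\mathcal{A}_{p_1p_2p_3p_4}, w) $$ $$ - \frac{120(M^1_6 - 15)}{P} \sum_{w \leqslant p_5 < \cdots < p_1 < z} S(\mathcal{A}_{p_1\cdots p_5}, w) + \frac{720}{P} \sum_{w \leqslant p_6 < \cdots < p_1 < z} S(\mathcal{A}_{p_1\cdots p_6}, w). $$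
   Context: Throughout, $p, p_1, p_2, \dots$ denote prime numbers. For a finite set $\mathcal{A}$ of positive integers and a positive integer $d$, $\mathcal{A}_d = \{a : ad \in \mathcal{A}\}$. For real $z$, $S(\mathcal{A}, z)$ denotes the number of $a \in \mathcal{A}$ having no prime factor less than $z$. Let $T = (0,1] \cup [2,3] \cup [4,5] \cup \cdots$, i.e. $T$ is the union of $(0,1]$ and the intervals $[k-1,k]$ over all odd integers $k \geqslant 3$, and let $\mathcal{U} = \{(x_1, x_2) : x_1, x_2 \in T,\ |x_1 - x_2| \leqslant 1\}$. *)

(* Defs.v *)
From mathcomp Require Import all_boot all_order all_algebra.
From mathcomp Require Import reals.
Set Implicit Arguments. Unset Strict Implicit. Unset Printing Implicit Defensive.
Import Order.TTheory GRing.Theory Num.Theory.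
Local Open Scope ring_scope.

Section Sieve.
Variable R : realType.

(* A finite set of positive integers is represented by a duplicate-free
   list [A : seq nat] (hypotheses [uniq A] and [all (> 0) A] in the theorem). *)

Definition Ad (A : seq nat) (d : nat) : seq nat :=
  [seq (a %/ d)%N | a <- A & (d %| a)%N].

Definition rough (z : R) (a : nat) : bool :=
  all (fun p => ~~ (p%:R < z)) (primes a).

Definition S (A : seq nat) (z : R) : nat := count (rough z) A.

(* the primes p with w <= p < z, in increasing order
   (every natural p with p < z satisfies p <= trunc z) *)
Definition primes_in (w z : R) : seq nat :=
  [seq p <- iota 0 (Num.truncn z).+1 | prime p && (w <= p%:R) && (p%:R < z)].

Definition sum1 (A : seq nat) (w z : R) : R :=
  \sum_(p1 <- primes_in w z) (S (Ad A p1) w)%:R.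
Definition sum2 (A : seq nat) (w z : R) : R :=
  \sum_(p1 <- primes_in w z) \sum_(p2 <- primes_in w z | (p2 < p1)%N)
    (S (Ad A (p1 * p2)) w)%:R.
Definition sum3 (A : seq nat) (w z : R) : R :=
  \sum_(p1 <- primes_in w z) \sum_(p2 <- primes_in w z | (p2 < p1)%N)
  \sum_(p3 <- primes_in w z | (p3 < p2)%N)
    (S (Ad A (p1 * p2 * p3)) w)%:R.
Definition sum4 (A : seq nat) (w z : R) : R :=
  \sum_(p1 <- primes_in w z) \sum_(p2 <- primes_in w z | (p2 < p1)%N)
  \sum_(p3 <- primes_in w z | (p3 < p2)%N) \sum_(p4 <- primes_in w z | (p4 < p3)%N)
    (S (Ad A (p1 * p2 * p3 * p4)) w)%:R.
Definition sum5 (A : seq nat) (w z : R) : R :=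
  \sum_(p1 <- primes_in w z) \sum_(p2 <- primes_in w z | (p2 < p1)%N)
  \sum_(p3 <- primes_in w z | (p3 < p2)%N) \sum_(p4 <- primes_in w z | (p4 < p3)%N)
  \sum_(p5 <- primes_in w z | (p5 < p4)%N)
    (S (Ad A (p1 * p2 * p3 * p4 * p5)) w)%:R.
Definition sum6 (A : seq nat) (w z : R) : R :=
  \sum_(p1 <- primes_in w z) \sum_(p2 <- primes_in w z | (p2 < p1)%N)
  \sum_(p3 <- primes_in w z | (p3 < p2)%N) \sum_(p4 <- primes_in w z | (p4 < p3)%N)
  \sum_(p5 <- primes_in w z | (p5 < p4)%N) \sum_(p6 <- primes_in w z | (p6 < p5)%N)
    (S (Ad A (p1 * p2 * p3 * p4 * p5 * p6)) w)%:R.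

Definition inT (x : R) : Prop :=
  (0 < x <= 1) \/ exists k : nat, [/\ odd k, (3 <= k)%N & (k.-1)%:R <= x <= k%:R].

Definition inU (x1 x2 : R) : Prop := [/\ inT x1, inT x2 & `|x1 - x2| <= 1].

Definition Msym (m : 'I_6 -> R) (r : nat) : R :=
  \sum_(I : {set 'I_6} | #|I| == r) \prod_(i in I) m i.

Definition m6 (m1 m2 m3 m4 m5 m6 : R) : 'I_6 -> R :=
  fun i => nth 0 [:: m1; m2; m3; m4; m5; m6] i.

End Sieve.

(* Main.v *)
Require Import Defs.
From mathcomp Require Import all_boot all_order all_algebra.
From mathcomp Require Import reals.
From mathcomp Require Import zify ring lra.
Import Order.TTheory GRing.Theory Num.Theory.
Local Open Scope ring_scope.

Lemma sorted_rconsE {s : seq nat} {y} :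
  sorted ltn (rcons s y) -> sorted ltn s /\ all (fun q => (q < y)%N) s.
Proof.
elim: s => [|x s IH] //= h.
have := h; rewrite (path_sortedE ltn_trans) => /andP[hall hs].
have [h1 h2] := IH hs; split.
  rewrite (path_sortedE ltn_trans) h1 andbT.
  by apply/allP => q hq; move/allP: hall; apply; rewrite mem_rcons in_cons hq orbT.
rewrite h2 andbT.
by move/allP: hall; apply; rewrite mem_rcons mem_head.
Qed.

Lemma hockey (s : seq nat) (P : pred nat) (p k : nat) :
  sorted ltn s ->
  (\sum_(q <- s | (q < p)%N && P q) 'C(count (fun q' => (q' < q)%N && P q') s, k))%N =
  'C(count (fun q => (q < p)%N && P q) s, k.+1).
Proof.
elim/last_ind: s => [|s y IH] hs; first by rewrite big_nil /= bin0n.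
have [hs' hall] := sorted_rconsE hs.
have Hc : forall q, q \in s -> count (fun q' => (q' < q)%N && P q') [:: y] = 0%N.
  move=> q hq /=; move/allP: hall => /(_ q hq) hqy.
  by rewrite ltnNge (ltnW hqy).
rewrite big_rcons big_seq_cond.
under eq_bigr => q /andP[hq _] do rewrite -cats1 count_cat Hc // addn0.
rewrite -big_seq_cond IH // -!cats1 !count_cat /= ltnn /= !addn0.
have -> : count (fun q' => (q' < y)%N && P q') s = count P s.
  by apply: eq_in_count => q hq; move/allP: hall => /(_ q hq) ->.
case: ifP => hy; first last.
  by rewrite addn0 addn0.
case/andP: hy => hyp hP; rewrite addn1 binS.
have -> : count (fun q => (q < p)%N && P q) s = count P s.
  by apply: eq_in_count => q hq; move/allP: hall => /(_ q hq) hqy; rewrite (ltn_trans hqy hyp).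
done.
Qed.
Lemma roughM (R : realType) (w : R) x y : (0 < x)%N -> (0 < y)%N ->
  rough w (x * y) = rough w x && rough w y.
Proof.
move=> hx hy; rewrite /rough -all_cat; apply: eq_all_r => p.
by rewrite primesM // mem_cat.
Qed.

Lemma rough_prime (R : realType) (w : R) p : prime p -> rough w p = ~~ (p%:R < w).
Proof. by move=> hp; rewrite /rough primes_prime //= andbT. Qed.

Lemma rough1 (R : realType) (w : R) : rough w 1.
Proof. by []. Qed.

Lemma rough_div (R : realType) (w : R) a d : (0 < a)%N -> (d %| a)%N -> rough w d ->
  rough w (a %/ d) = rough w a.
Proof.
move=> ha hd hr.
have hd0 : (0 < d)%N by apply: dvdn_gt0 ha hd.
have hq : (0 < a %/ d)%N by rewrite divn_gt0 // dvdn_leq.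
by rewrite -{2}(divnK hd) roughM // hr andbT.
Qed.
Fixpoint G {R : realType} (F : nat -> R) (s : seq nat) (k d p : nat) : R :=
  match k with
  | 0 => F d
  | k'.+1 => \sum_(q <- s | (q < p)%N) G F s k' (d * q) q
  end.

Section T.
Variable R : realType.
Implicit Types w z : R.

Definition FA (A : seq nat) w (d : nat) : R := (S (Ad A d) w)%:R.

Lemma sum1E A w z : sum1 A w z = \sum_(p1 <- primes_in w z) G (FA A w) (primes_in w z) 0 p1 p1.
Proof. by []. Qed.
Lemma sum2E A w z : sum2 A w z = \sum_(p1 <- primes_in w z) G (FA A w) (primes_in w z) 1 p1 p1.
Proof. by []. Qed.
Lemma sum3E A w z : sum3 A w z = \sum_(p1 <- primes_in w z) G (FA A w) (primes_in w z) 2 p1 p1.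
Proof. by []. Qed.
Lemma sum4E A w z : sum4 A w z = \sum_(p1 <- primes_in w z) G (FA A w) (primes_in w z) 3 p1 p1.
Proof. by []. Qed.
Lemma sum5E A w z : sum5 A w z = \sum_(p1 <- primes_in w z) G (FA A w) (primes_in w z) 4 p1 p1.
Proof. by []. Qed.
Lemma sum6E A w z : sum6 A w z = \sum_(p1 <- primes_in w z) G (FA A w) (primes_in w z) 5 p1 p1.
Proof. by []. Qed.

Lemma mem_primes_in w z q : q \in primes_in w z =
  [&& (q < (Num.truncn z).+1)%N, prime q, w <= q%:R & q%:R < z].
Proof. by rewrite /primes_in mem_filter mem_iota /= andbC !andbA. Qed.

Lemma sorted_primes_in w z : sorted ltn (primes_in w z).
Proof. exact: sorted_filter ltn_trans _ _ (iota_ltn_sorted _ _). Qed.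

Lemma G_top (F : nat -> R) w z k :
  \sum_(p1 <- primes_in w z) G F (primes_in w z) k p1 p1 =
  G F (primes_in w z) k.+1 1 (Num.truncn z).+1.
Proof.
rewrite /= [LHS]big_seq_cond [RHS]big_seq_cond.
apply: eq_big => [q|q /andP[hq _]]; last by rewrite mul1n.
by case hq: (q \in _) => //=; move: hq; rewrite mem_primes_in => /andP[-> _].
Qed.

Lemma G_sum (I : Type) (A : seq I) (F : I -> nat -> R) s k d p :
  G (fun d => \sum_(a <- A) F a d) s k d p = \sum_(a <- A) G (F a) s k d p.
Proof.
elim: k d p => [|k IH] d p //=.
under eq_bigr do rewrite IH.
by rewrite exchange_big.
Qed.

Lemma FA_sum A w d : FA A w d = \sum_(a <- A) FA [:: a] w d.
Proof.
rewrite /FA; elim: A => [|a A IH]; first by rewrite big_nil.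
rewrite big_cons -IH /S /Ad /=.
by case: (d %| a)%N => /=; rewrite ?addn0 ?natrD ?add0r.
Qed.

Lemma FA1 a w d : FA [:: a] w d = ((d %| a)%N && rough w (a %/ d))%:R.
Proof. by rewrite /FA /S /Ad /=; case: (d %| a)%N => //=; rewrite addn0. Qed.


Lemma G_eval a w z k : (0 < a)%N -> forall d p, (0 < d)%N -> rough w d ->
  (forall q, q \in primes_in w z -> (q < p)%N -> coprime d q) ->
  G (FA [:: a] w) (primes_in w z) k d p =
  ((d %| a)%N && rough w a)%:R *
  ('C(count (fun q => (q < p)%N && (q %| a)%N) (primes_in w z), k))%:R.
Proof.
move=> ha; elim: k => [|k IH] d p hd hr hc.
  rewrite /= FA1 bin0 mulr1; case hda: (d %| a)%N => //=.
  by rewrite rough_div.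
have E : forall q, q \in primes_in w z -> (q < p)%N ->
    G (FA [:: a] w) (primes_in w z) k (d * q) q =
    ((d %| a)%N && rough w a)%:R * ((q %| a)%N%:R *
    ('C(count (fun q' => (q' < q)%N && (q' %| a)%N) (primes_in w z), k))%:R).
  move=> q hq hqp.
  have := hq; rewrite mem_primes_in => /and4P[_ hpq hwq _].
  have hq0 : (0 < q)%N by apply: prime_gt0.
  rewrite IH.
  - rewrite Gauss_dvd; last exact: hc.
    by case: (d %| a)%N; case: (q %| a)%N; case: (rough w a); rewrite /= ?mul0r ?mul1r ?mulr0.
  - by rewrite muln_gt0 hd.
  - by rewrite roughM // hr rough_prime // -leNgt.
  move=> q' hq' hq'q; rewrite coprimeMl hc //=; last exact: ltn_trans hq'q hqp.
  have := hq'; rewrite mem_primes_in => /and4P[_ hpq' _ _].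
  by rewrite prime_coprime // dvdn_prime2 // gtn_eqF.
rewrite /= big_seq_cond (eq_bigr (fun q => ((d %| a)%N && rough w a)%:R * ((q %| a)%N%:R *
    ('C(count (fun q' => (q' < q)%N && (q' %| a)%N) (primes_in w z), k))%:R))); last first.
  by move=> q /andP[hq hqp]; exact: E.
rewrite -big_seq_cond -mulr_sumr; congr (_ * _).
rewrite -(hockey _ (fun q => (q %| a)%N) p k (sorted_primes_in w z)) natr_sum big_mkcondr.
by apply: eq_bigr => q _; case: (q %| a)%N; rewrite /= ?mul1r ?mul0r.
Qed.

Lemma G_ext (F1 F2 : nat -> R) s k d p : F1 =1 F2 -> G F1 s k d p = G F2 s k d p.
Proof.
move=> e; elim: k d p => [|k IH] d p /=; first exact: e.
by apply: eq_bigr => q _; rewrite IH.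
Qed.

Lemma count_natr (T : Type) (P : pred T) (s : seq T) : (count P s)%:R = \sum_(a <- s) (P a)%:R :> R.
Proof. by elim: s => [|x s IH]; rewrite ?big_nil ?big_cons //= natrD IH. Qed.

Lemma sum_eval A w z k : all (fun a => (0 < a)%N) A ->
  \sum_(p1 <- primes_in w z) G (FA A w) (primes_in w z) k p1 p1 =
  \sum_(a <- A) (rough w a)%:R *
    ('C(count (fun q => (q < (Num.truncn z).+1)%N && (q %| a)%N) (primes_in w z), k.+1))%:R.
Proof.
move=> hpos; rewrite G_top (G_ext _ (fun d => \sum_(a <- A) FA [:: a] w d) _ _ _ _ (FA_sum A w)) G_sum big_seq [RHS]big_seq.
apply: eq_bigr => a ha.
have ha0 : (0 < a)%N by move/allP: hpos => /(_ a ha).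
rewrite (G_eval a w z k.+1 ha0) //; first by rewrite dvd1n.
by move=> q _ _; exact: coprime1n.
Qed.

End T.
Lemma prod_expand (R : realType) (m : 'I_6 -> R) (y : R) :
  \prod_(i < 6) (m i + y) = \sum_(r < 7) Msym m r * y ^+ (6 - r).
Proof.
rewrite bigA_distr.
have E : forall J : {set 'I_6}, \prod_(i < 6) (if i \in J then m i else y) =
    (\prod_(i in J) m i) * y ^+ (6 - #|J|).
  move=> J; rewrite (bigID (mem J)) /=; congr (_ * _).
    by apply: eq_bigr => i ->.
  rewrite (eq_bigr (fun _ => y)); last by move=> i /negbTE ->.
  rewrite prodr_const; congr (_ ^+ _).
  move: (cardC (mem J)); rewrite card_ord => h.
  have -> : #|(fun i : 'I_6 => i \notin J)| = #|[predC mem J]| by apply: eq_card.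
  rewrite -{1}(addKn #|J| #|[predC mem J]|); congr (_ - _)%N; exact: h.
rewrite (eq_bigr _ (fun J _ => E J)).
rewrite (partition_big (fun J : {set 'I_6} => (inord #|J| : 'I_7)) xpredT) //.
apply: eq_bigr => r _; rewrite /Msym mulr_suml.
have hc : forall J : {set 'I_6}, (#|J| < 7)%N.
  by move=> J; have := max_card J; rewrite card_ord.
apply: eq_big => J.
  by rewrite /= -(inj_eq val_inj) /= inordK.
by rewrite /= -(inj_eq val_inj) /= inordK // => /eqP ->.
Qed.

Lemma Msym0 (R : realType) (m : 'I_6 -> R) : Msym m 0 = 1.
Proof.
rewrite /Msym (eq_bigl (pred1 set0)) => [|J]; last by rewrite /= cards_eq0.
by rewrite big_pred1_eq big_set0.
Qed.

Lemma Msym6 (R : realType) (m : 'I_6 -> R) : Msym m 6 = \prod_(i < 6) m i.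
Proof.
rewrite /Msym (eq_bigl (pred1 setT)) => [|J]; last first.
  rewrite /= eqEcard subsetT cardsT card_ord /= eqn_leq andbC.
  by rewrite /=; have := max_card J; rewrite card_ord => ->; rewrite andbT.
rewrite (big_pred1 setT) //; apply: eq_bigl => i; by rewrite in_setT.
Qed.

Lemma expand6 (R : realType) (m1 m2 m3 m4 m5 m6 : R) (x : R) :
  let M := Msym (Defs.m6 m1 m2 m3 m4 m5 m6) in
  (m1 - x) * (m2 - x) * (m3 - x) * (m4 - x) * (m5 - x) * (m6 - x) =
  x ^+ 6 - M 1%N * x ^+ 5 + M 2%N * x ^+ 4 - M 3%N * x ^+ 3 + M 4%N * x ^+ 2
  - M 5%N * x + m1 * m2 * m3 * m4 * m5 * m6.
Proof.
move=> M; rewrite /M.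
have := prod_expand _ (Defs.m6 m1 m2 m3 m4 m5 m6) (- x).
rewrite !big_ord_recr /= !big_ord0 /= Msym0 Msym6 !big_ord_recr /= big_ord0.
rewrite /Defs.m6 /= mul1r => ->.
ring.
Qed.
Section B.
Variable R : realType.
Implicit Types n : nat.

Lemma C2 n : ('C(n, 2))%:R * 2 = n%:R * (n%:R - 1) :> R.
Proof.
elim: n => [|n IH]; first by rewrite bin0n !mulr0n !mul0r.
rewrite binS natrD mulrDl IH bin1 -natr1; ring.
Qed.

Lemma C3 n : ('C(n, 3))%:R * 6 = n%:R * (n%:R - 1) * (n%:R - 2) :> R.
Proof.
elim: n => [|n IH]; first by rewrite bin0n !mulr0n !mul0r.
rewrite binS natrD mulrDl IH -natr1; have := C2 n; lra.
Qed.

Lemma C4 n : ('C(n, 4))%:R * 24 = n%:R * (n%:R - 1) * (n%:R - 2) * (n%:R - 3) :> R.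
Proof.
elim: n => [|n IH]; first by rewrite bin0n !mulr0n !mul0r.
rewrite binS natrD mulrDl IH -natr1; have := C3 n; lra.
Qed.

Lemma C5 n : ('C(n, 5))%:R * 120 = n%:R * (n%:R - 1) * (n%:R - 2) * (n%:R - 3) * (n%:R - 4) :> R.
Proof.
elim: n => [|n IH]; first by rewrite bin0n !mulr0n !mul0r.
rewrite binS natrD mulrDl IH -natr1; have := C4 n; lra.
Qed.

Lemma C6 n : ('C(n, 6))%:R * 720 = n%:R * (n%:R - 1) * (n%:R - 2) * (n%:R - 3) * (n%:R - 4) * (n%:R - 5) :> R.
Proof.
elim: n => [|n IH]; first by rewrite bin0n !mulr0n !mul0r.
rewrite binS natrD mulrDl IH -natr1; have := C5 n; lra.
Qed.

End B.
Section TT.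
Variable R : realType.

Lemma inT_pos (x : R) : inT x -> 0 < x.
Proof.
case=> [/andP[h _]|[k [hk hk3 /andP[h1 h2]]]] //.
apply: lt_le_trans h1; rewrite ltr0n; lia.
Qed.

Lemma inT_L1 (x : R) n : inT x -> n%:R - 1 < x -> x < n%:R -> odd n.
Proof.
case=> [/andP[h0 h1]|[k [hk hk3 /andP[h1 h2]]]] hl hr.
  have hn0 : (0 < n)%N by rewrite -(ltr0n R); apply: lt_trans hr.
  have hn2 : (n < 2)%N by rewrite -(ltr_nat R) -natr1; lra.
  by have -> : n = 1%N by lia.
have e1 : (k.-1 < n)%N by rewrite -(ltr_nat R); apply: le_lt_trans hr.
have e2 : (n < k.+1)%N by rewrite -(ltr_nat R) -natr1; lra.
by have -> : n = k by lia.
Qed.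

Lemma inT_L2 (x : R) n : inT x -> n%:R < x -> x < n%:R + 1 -> ~~ odd n.
Proof.
case=> [/andP[h0 h1]|[k [hk hk3 /andP[h1 h2]]]] hl hr.
  have hn : (n < 1)%N by rewrite -(ltr_nat R); lra.
  by have -> : n = 0%N by lia.
have e1 : (n < k)%N by rewrite -(ltr_nat R); apply: lt_le_trans h2.
have e2 : (k.-1 < n.+1)%N by rewrite -(ltr_nat R) -natr1; lra.
have hkn : k = n.+1 by lia.
by move: hk; rewrite hkn /=.
Qed.

Lemma pair_ge0 (a b : R) n : inU a b -> 0 <= (a - n%:R) * (b - n%:R).
Proof.
case=> Ta Tb; rewrite ler_norml => /andP[h1 h2].
have key : forall x y : R, inT x -> inT y -> y - x <= 1 -> x < n%:R -> n%:R < y -> False.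
  move=> x y Tx Ty hxy hx hy.
  have o1 := inT_L1 x n Tx (_ : n%:R - 1 < x) hx.
  have o2 := inT_L2 y n Ty hy (_ : y < n%:R + 1).
  have : odd n by apply: o1; lra.
  have : ~~ odd n by apply: o2; lra.
  by move/negP.
case: (ltrP a n%:R) => ha; case: (ltrP b n%:R) => hb.
- nra.
- case: (ltrP n%:R b) => hb'; last nra.
  by exfalso; apply: (key a b) => //; lra.
- case: (ltrP n%:R a) => ha'; last nra.
  by exfalso; apply: (key b a) => //; lra.
- nra.
Qed.


Lemma elem (m1 m2 m3 m4 m5 m6 : R) (M : nat -> R) (P : R) (x r : bool) (n : nat) :
  inU m1 m2 -> inU m3 m4 -> inU m5 m6 ->
  (forall y, (m1 - y) * (m2 - y) * (m3 - y) * (m4 - y) * (m5 - y) * (m6 - y) =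
    y ^+ 6 - M 1%N * y ^+ 5 + M 2%N * y ^+ 4 - M 3%N * y ^+ 3 +
    M 4%N * y ^+ 2 - M 5%N * y + m1 * m2 * m3 * m4 * m5 * m6) ->
  (x -> r) -> (x -> n = 0%N) -> P = m1 * m2 * m3 * m4 * m5 * m6 ->
  x%:R <=
  r%:R -
  (M 5%N - M 4%N + M 3%N - M 2%N + M 1%N - 1) / P * (r%:R * 'C(n, 1)%:R) +
  2 * (M 4%N - 3 * M 3%N + 7 * M 2%N - 15 * M 1%N + 31) / P * (r%:R * 'C(n, 2)%:R) -
  6 * (M 3%N - 6 * M 2%N + 25 * M 1%N - 90) / P * (r%:R * 'C(n, 3)%:R) +
  24 * (M 2%N - 10 * M 1%N + 65) / P * (r%:R * 'C(n, 4)%:R) -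
  120 * (M 1%N - 15) / P * (r%:R * 'C(n, 5)%:R) +
  720 / P * (r%:R * 'C(n, 6)%:R).
Proof.
move=> h12 h34 h56 hexp hxr hxn hP.
case: r hxr => hxr; last first.
  have -> : x = false by case: x hxr hxn => // /(_ isT).
  rewrite /=; lra.
case: n hxn => [|n] hxn.
  rewrite !bin0n; have : (x%:R : R) <= 1 by case: x {hxr hxn}.
  rewrite /=; lra.
have -> : x = false by case: x hxr hxn => // _ /(_ isT).
have hP0 : 0 < P.
  case: h12 => [t1 t2 _]; case: h34 => [t3 t4 _]; case: h56 => [t5 t6 _].
  by rewrite hP !mulr_gt0 // inT_pos.
rewrite -hP in hexp.
set N := ((n.+1)%:R : R).
have nz : forall k : nat, (k.+1%:R : R) != 0 by move=> k; rewrite pnatr_eq0.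
have c2 : 'C(n.+1, 2)%:R = N * (N - 1) / 2%:R :> R by rewrite -C2 mulfK.
have c3 : 'C(n.+1, 3)%:R = N * (N - 1) * (N - 2) / 6%:R :> R by rewrite -C3 mulfK.
have c4 : 'C(n.+1, 4)%:R = N * (N - 1) * (N - 2) * (N - 3) / 24%:R :> R by rewrite -C4 mulfK.
have c5 : 'C(n.+1, 5)%:R = N * (N - 1) * (N - 2) * (N - 3) * (N - 4) / 120%:R :> R by rewrite -C5 mulfK.
have c6 : 'C(n.+1, 6)%:R = N * (N - 1) * (N - 2) * (N - 3) * (N - 4) * (N - 5) / 720%:R :> R by rewrite -C6 mulfK.
rewrite bin1 c2 c3 c4 c5 c6 -/N /=.
set E := (X in 0 <= X).
have hPn : P != 0 by rewrite gt_eqF.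
have -> : E = (m1 - N) * (m2 - N) * (m3 - N) * (m4 - N) * (m5 - N) * (m6 - N) / P.
  by rewrite /E hexp; field.
apply: divr_ge0; last exact: ltW.
have -> : (m1 - N) * (m2 - N) * (m3 - N) * (m4 - N) * (m5 - N) * (m6 - N) =
  ((m1 - N) * (m2 - N)) * ((m3 - N) * (m4 - N)) * ((m5 - N) * (m6 - N)) by ring.
by apply: mulr_ge0; [apply: mulr_ge0|]; exact: pair_ge0.
Qed.
End TT.

Theorem theorem4 (R : realType) (A : seq nat) (w z : R)
    (m1 m2 m3 m4 m5 m6 : R) :
  uniq A -> all (fun a => (0 < a)%N) A -> w <= z ->
  inU m1 m2 -> inU m3 m4 -> inU m5 m6 ->
  let m := Defs.m6 m1 m2 m3 m4 m5 m6 in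
  let M := Msym m in
  let P := m1 * m2 * m3 * m4 * m5 * m6 in
  (S A z)%:R <=
    (S A w)%:R
    - (M 5%N - M 4%N + M 3%N - M 2%N + M 1%N - 1) / P * sum1 A w z
    + 2 * (M 4%N - 3 * M 3%N + 7 * M 2%N - 15 * M 1%N + 31) / P * sum2 A w z
    - 6 * (M 3%N - 6 * M 2%N + 25 * M 1%N - 90) / P * sum3 A w z
    + 24 * (M 2%N - 10 * M 1%N + 65) / P * sum4 A w z
    - 120 * (M 1%N - 15) / P * sum5 A w z
    + 720 / P * sum6 A w z.
Proof.
move=> hu hpos hwz h12 h34 h56; cbv zeta.
have hexp := expand6 _ m1 m2 m3 m4 m5 m6.
cbv zeta in hexp.
move: hexp; generalize (Msym (Defs.m6 m1 m2 m3 m4 m5 m6)) => M hexp.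
set P := (m1 * _ * _ * _ * _ * _).
rewrite sum1E sum2E sum3E sum4E sum5E sum6E !sum_eval //.
rewrite /S !count_natr !mulr_sumr.
rewrite -sumrB -big_split -sumrB -big_split -sumrB -big_split /=.
rewrite big_seq [X in _ <= X]big_seq; apply: ler_sum => a ha.
have ha0 : (0 < a)%N by move/allP: hpos => /(_ a ha).
apply: (@elem R m1 m2 m3 m4 m5 m6 M P) => //.
  rewrite /rough => /allP h; apply/allP => p hp; have := h p hp.
  by apply: contra => hpw; exact: lt_le_trans hpw hwz.
rewrite /rough => /allP h; apply/eqP; rewrite -leqn0 leqNgt -has_count.
apply/negP => /hasP [q hq /andP[_ hqa]].
move: hq; rewrite mem_primes_in => /and4P[_ hpq _ hqz].
have : q \in primes a by rewrite mem_primes hpq ha0.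
by move/h; rewrite hqz.
Qed.
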